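(* Under the setting described in the context, let $m^*$ be a Nash equilibrium. Then for every $i\in\mathcal N$ and $j\in\mathcal R_i$, ${}^i\pi^*_j\big({}^ia^*_j-{}^{i^+}a^*_j\big)^2=0$ and ${}^{i^+}\pi^*_j\big({}^{i^+}a^*_j-{}^{i^{++}}a^*_j\big)^2=0$ (where $m^*_k=({}^ka^*_{\mathcal R_k},{}^k\pi^*_{\mathcal R_k})$). Consequently, for every $i\in\mathcal N$, $\hat t_i(m^* )=\sum_{j\in\mathcal R_i}l_{ij}(m^* )\,\hat a_j(m^* )$.
   Context: Let $N\ge 1$ and $\mathcal N=\{1,\dots,N\}$. For each $i\in\mathcal N$ a set $\mathcal R_i\subseteq\mathcal N$ with $i\in\mathcal R_i$ is given; for $j\in\mathcal N$ put $\mathcal C_j=\{k\in\mathcal N: j\in\mathcal R_k\}$, and assume $|\mathcal C_j|\ge 3$ for all $j$. Each $\mathcal A_i\subset\mathbb R$ is a nonempty convex compact set with $0\in\mathcal A_i$. For each $i$, $u_i:\mathbb R^{\mathcal R_i}\to\mathbb R\cup\{-\infty\}$ is concave, real-valued whenever $a_i\in\mathcal A_i$, and $-\infty$ whenever $a_i\notin\mathcal A_i$. Aggregate utility: $u_i^A(a_{\mathcal R_i},t_i)=-t_i+u_i(a_{\mathcal R_i})$ if $a_i\in\mathcal A_i$, else $-\infty$. Game form: message $m_i=({}^ia_{\mathcal R_i},{}^i\pi_{\mathcal R_i})\in\mathcal M_i=\mathbb R^{\mathcal R_i}\times\mathbb R_+^{\mathcal R_i}$; $\hat a_i(m)=\frac1{|\mathcal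 C_i|}\sum_{k\in\mathcal C_i}{}^ka_i$. For each $j$ fix a bijection $\mathcal I_{\cdot j}:\mathcal C_j\to\{1,\dots,|\mathcal C_j|\}$, write $\mathcal C_{j(k)}$ for the user with index $k$ in $\mathcal C_j$, indices cyclic modulo $|\mathcal C_j|$. For $i\in\mathcal N$, $j\in\mathcal R_i$ let $i^+=\mathcal C_{j(\mathcal I_{ij}+1)}$, $i^{++}=\mathcal C_{j(\mathcal I_{ij}+2)}$, $l_{ij}(m)={}^{i^+}\pi_j-{}^{i^{++}}\pi_j$, and $\hat t_i(m)=\sum_{j\in\mathcal R_i}\Big[l_{ij}(m)\hat a_j(m)+{}^i\pi_j({}^ia_j-{}^{i^+}a_j)^2-{}^{i^+}\pi_j({}^{i^+}a_j-{}^{i^{++}}a_j)^2\Big]$. A Nash equilibrium is $m^*$ such that for all $i$ and $m_i\in\mathcal M_i$, $u_i^A\big((\hat a_j(m^* ))_{j\in\mathcal R_i},\hat t_i(m^* )\big)\ge u_i^A\big((\hat a_j(m_i,m^*_{-i}))_{j\in\mathcal R_i},\hat t_i(m_i,m^*_{-i})\big)$. *)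

(* Defs.v *)
From Stdlib Require Import Reals List Permutation Arith.
From Stdlib Require Import Rtopology.
Import ListNotations.
Open Scope R_scope.

(* Users are 0 .. N-1 (0-based version of {1..N}).
   Rs i : list nat enumerates the set R_i (duplicate-free).
   A message profile m : nat -> (nat -> R) * (nat -> R),
   fst (m k) j = ^k a_j, snd (m k) j = ^k pi_j  (only j in R_k matter). *)

Inductive ER : Type := Fin (r : R) | NegInf.

Definition ER_le (x y : ER) : Prop :=
  match x, y with
  | NegInf, _ => True
  | Fin _, NegInf => False
  | Fin a, Fin b => a <= b
  end.

Definition lsum (l : list nat) (f : nat -> R) : R :=
  fold_right (fun k acc => f k + acc) 0 l.

Definition Cset (N : nat) (Rs : nat -> list nat) (j : nat) : list nat :=
  filter (fun k => if in_dec Nat.eq_dec j (Rs k) then true else false) (seq 0 N).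

Fixpoint index_of (x : nat) (l : list nat) : nat :=
  match l with
  | [] => 0
  | y :: t => if Nat.eq_dec x y then 0 else S (index_of x t)
  end.

(* o enumerates C_j; the position of an element in o is the bijection
   I_{.j} (0-based).  cyc_succ o i s = the user whose index is I_{ij}+s,
   cyclically modulo |C_j|. *)
Definition cyc_succ (o : list nat) (i s : nat) : nat :=
  nth ((index_of i o + s) mod length o) o 0%nat.

Definition profile := nat -> (nat -> R) * (nat -> R).

Definition update (m : profile) (i : nat) (mi : (nat -> R) * (nat -> R)) : profile :=
  fun k => if Nat.eq_dec k i then mi else m k.

Definition ahat (N : nat) (Rs : nat -> list nat) (m : profile) (j : nat) : R :=
  / INR (length (Cset N Rs j)) * lsum (Cset N Rs j) (fun k => fst (m k) j).

Definition iplus (ord : nat -> list nat) (i j : nat) : nat := cyc_succ (ord j) i 1.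
Definition iplus2 (ord : nat -> list nat) (i j : nat) : nat := cyc_succ (ord j) i 2.

Definition lij (ord : nat -> list nat) (m : profile) (i j : nat) : R :=
  snd (m (iplus ord i j)) j - snd (m (iplus2 ord i j)) j.

Definition that (N : nat) (Rs : nat -> list nat) (ord : nat -> list nat)
  (m : profile) (i : nat) : R :=
  lsum (Rs i) (fun j =>
    lij ord m i j * ahat N Rs m j
    + snd (m i) j * (fst (m i) j - fst (m (iplus ord i j)) j) ^ 2
    - snd (m (iplus ord i j)) j
        * (fst (m (iplus ord i j)) j - fst (m (iplus2 ord i j)) j) ^ 2).

Definition uA (u : nat -> (nat -> R) -> ER) (i : nat) (a : nat -> R) (t : R) : ER :=
  match u i a with
  | Fin r => Fin (- t + r)
  | NegInf => NegInf
  end.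

Definition admissible (Rs : nat -> list nat) (i : nat) (mi : (nat -> R) * (nat -> R)) : Prop :=
  forall j, In j (Rs i) -> 0 <= snd mi j.

Definition outcome_util (N : nat) (Rs : nat -> list nat) (ord : nat -> list nat)
  (u : nat -> (nat -> R) -> ER) (m : profile) (i : nat) : ER :=
  uA u i (fun j => ahat N Rs m j) (that N Rs ord m i).

Definition nash_equilibrium (N : nat) (Rs : nat -> list nat) (ord : nat -> list nat)
  (u : nat -> (nat -> R) -> ER) (m : profile) : Prop :=
  (forall i, (i < N)%nat -> admissible Rs i (m i)) /\
  (forall i, (i < N)%nat -> forall mi, admissible Rs i mi ->
     ER_le (outcome_util N Rs ord u (update m i mi) i) (outcome_util N Rs ord u m i)).

Definition setting (N : nat) (Rs : nat -> list nat) (ord : nat -> list nat)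
  (A : nat -> R -> Prop) (u : nat -> (nat -> R) -> ER) : Prop :=
  (1 <= N)%nat /\
  (forall i, (i < N)%nat ->
     NoDup (Rs i) /\ In i (Rs i) /\ (forall j, In j (Rs i) -> (j < N)%nat)) /\
  (forall j, (j < N)%nat -> (3 <= length (Cset N Rs j))%nat) /\
  (forall j, (j < N)%nat -> Permutation (ord j) (Cset N Rs j)) /\
  (forall i, (i < N)%nat ->
     (exists x, A i x) /\
     (forall x y lam, A i x -> A i y -> 0 <= lam <= 1 -> A i (lam * x + (1 - lam) * y)) /\
     compact (A i) /\ A i 0) /\
  (forall i, (i < N)%nat ->
     (forall a b, (forall j, In j (Rs i) -> a j = b j) -> u i a = u i b) /\
     (forall a, A i (a i) -> exists r, u i a = Fin r) /\
     (forall a, ~ A i (a i) -> u i a = NegInf) /\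
     (forall a b ra rb lam, 0 <= lam <= 1 -> u i a = Fin ra -> u i b = Fin rb ->
        exists r, u i (fun j => lam * a j + (1 - lam) * b j) = Fin r /\
                  lam * ra + (1 - lam) * rb <= r)).

(* Main.v *)
Require Import Defs.
From Stdlib Require Import Reals List Permutation Arith Rtopology.
From Stdlib Require Import Lra Lia FunctionalExtensionality.
Import ListNotations.
Open Scope R_scope.

Lemma lsum_ext l f g : (forall x, In x l -> f x = g x) -> lsum l f = lsum l g.
Proof.
  induction l; simpl; intros H; auto.
  rewrite H by auto. rewrite IHl; auto.
Qed.

Lemma lsum_minus l f g : lsum l f - lsum l g = lsum l (fun x => f x - g x).
Proof. induction l; simpl; [lra|]. rewrite <- IHl. lra. Qed.

Lemma lsum_nonneg l f : (forall y, In y l -> 0 <= f y) -> 0 <= lsum l f.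
Proof. induction l; simpl; intros H; [lra|]. pose proof (H a (or_introl eq_refl)).
  assert (0 <= lsum l f) by auto. lra. Qed.

Lemma lsum_ge l f x : (forall y, In y l -> 0 <= f y) -> In x l -> f x <= lsum l f.
Proof.
  induction l; simpl; intros H Hx; [contradiction|].
  destruct Hx as [<-|Hx].
  - assert (0 <= lsum l f) by (apply lsum_nonneg; auto). lra.
  - pose proof (H a (or_introl eq_refl)). assert (f x <= lsum l f) by auto. lra.
Qed.

Lemma lsum_upd l f g i : NoDup l -> In i l -> (forall k, k <> i -> g k = f k) ->
  lsum l g = lsum l f - f i + g i.
Proof.
  induction l; simpl; intros Hnd Hi Hg; [contradiction|].
  inversion Hnd; subst.
  destruct Hi as [<-|Hi].
  - rewrite (lsum_ext l g f). lra. intros x Hx. apply Hg. intros ->. auto.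
  - rewrite (IHl H2 Hi Hg). rewrite Hg. lra. intros ->. auto.
Qed.

Lemma Cset_In N Rs j k : In k (Cset N Rs j) <-> ((k < N)%nat /\ In j (Rs k)).
Proof.
  unfold Cset. rewrite filter_In, in_seq.
  destruct (in_dec Nat.eq_dec j (Rs k)); split; intros; intuition; try lia; discriminate.
Qed.

Lemma Cset_NoDup N Rs j : NoDup (Cset N Rs j).
Proof. apply NoDup_filter, seq_NoDup. Qed.

Lemma index_of_In x l d : In x l -> (index_of x l < length l)%nat /\ nth (index_of x l) l d = x.
Proof.
  induction l; simpl; intros H; [contradiction|].
  destruct (Nat.eq_dec x a); [split; [lia|auto]|].
  destruct H as [->|H]; [congruence|]. destruct (IHl H). split; [lia|auto].
Qed.

Lemma index_of_nth l n d : NoDup l -> (n < length l)%nat -> index_of (nth n l d) l = n.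
Proof.
  revert n; induction l; simpl; intros n Hnd Hn; [lia|].
  inversion Hnd; subst.
  destruct n.
  - destruct (Nat.eq_dec a a); congruence.
  - destruct (Nat.eq_dec (nth n l d) a).
    + exfalso. apply H1. rewrite <- e. apply nth_In. lia.
    + f_equal. apply IHl; auto. lia.
Qed.

Section S.
Variables (N : nat) (Rs : nat -> list nat) (ord : nat -> list nat)
  (A : nat -> R -> Prop) (u : nat -> (nat -> R) -> ER) (m : profile).
Hypothesis Hs : setting N Rs ord A u.
Hypothesis Hne : nash_equilibrium N Rs ord u m.

Lemma finite_util i : (i < N)%nat -> exists r, u i (fun j => ahat N Rs m j) = Fin r.
Proof.
  intros Hi.
  destruct Hs as (_ & HR & _ & _ & _ & HU).
  destruct (HR i Hi) as (_ & Hii & _).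
  destruct (HU i Hi) as (_ & Hfin & _ & _).
  destruct Hne as (Had & Hnash).
  set (C := Cset N Rs i).
  set (S0 := lsum C (fun k => fst (m k) i)).
  set (c := fst (m i) i - S0).
  set (mi := ((fun k => if Nat.eq_dec k i then c else fst (m i) k), snd (m i))).
  assert (Hadm : admissible Rs i mi) by (intros j Hj; apply (Had i Hi j Hj)).
  pose proof (Hnash i Hi mi Hadm) as Hle.
  assert (Hz : ahat N Rs (update m i mi) i = 0).
  { unfold ahat. fold C.
    rewrite (lsum_upd C (fun k => fst (m k) i) _ i).
    - unfold update. destruct (Nat.eq_dec i i); [|congruence]. simpl.
      destruct (Nat.eq_dec i i); [|congruence]. unfold c. fold S0.
      replace (S0 - fst (m i) i + (fst (m i) i - S0)) with 0 by ring. ring.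
    - apply Cset_NoDup.
    - apply Cset_In. auto.
    - intros k Hk. unfold update. destruct (Nat.eq_dec k i); congruence. }
  destruct Hs as (_ & _ & _ & _ & HA & _).
  destruct (HA i Hi) as (_ & _ & _ & HA0).
  destruct (Hfin (fun j => ahat N Rs (update m i mi) j)) as [r' Hr'].
  { simpl. rewrite Hz. auto. }
  unfold outcome_util, uA in Hle. rewrite Hr' in Hle.
  destruct (u i (fun j => ahat N Rs m j)); [eauto|contradiction].
Qed.

Lemma cyc_facts i j : (i < N)%nat -> In j (Rs i) ->
  let o := ord j in let L := length o in let p := index_of i o in
  NoDup o /\ (3 <= L)%nat /\ (p < L)%nat /\ nth p o 0%nat = i /\ (j < N)%nat.
Proof.
  intros Hi Hj o L p.
  destruct Hs as (_ & HR & HC & HP & _).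
  destruct (HR i Hi) as (_ & _ & HjN). specialize (HjN j Hj).
  pose proof (HP j HjN) as Hp.
  assert (NoDup o) by (apply (Permutation_NoDup (Permutation_sym Hp)), Cset_NoDup).
  assert (In i o) by (apply (Permutation_in _ (Permutation_sym Hp)), Cset_In; auto).
  destruct (index_of_In i o 0%nat H0).
  repeat split; auto.
  unfold L, o. rewrite (Permutation_length Hp). auto.
Qed.

Lemma mod_ne L p s : (3 <= L)%nat -> (p < L)%nat -> (1 <= s <= 2)%nat -> (p + s) mod L <> p.
Proof.
  intros HL Hp Hs' E.
  pose proof (Nat.div_mod_eq (p + s) L) as D.
  rewrite E in D. destruct ((p + s) / L)%nat as [|q]; nia.
Qed.

Lemma main i j : (i < N)%nat -> In j (Rs i) ->
  snd (m i) j * (fst (m i) j - fst (m (iplus ord i j)) j) ^ 2 = 0.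
Proof.
  intros Hi Hj.
  destruct (cyc_facts i j Hi Hj) as (Hnd & HL & Hp & Hnth & HjN).
  set (ip := iplus ord i j). set (ip2 := iplus2 ord i j).
  assert (Hip : ip <> i).
  { unfold ip, iplus, cyc_succ. intros E. rewrite <- Hnth in E at 2.
    apply NoDup_nth in E; auto; [ | apply Nat.mod_upper_bound; lia].
    eapply mod_ne; [ | | | exact E]; lia. }
  assert (Hip2 : ip2 <> i).
  { unfold ip2, iplus2, cyc_succ. intros E. rewrite <- Hnth in E at 2.
    apply NoDup_nth in E; auto; [ | apply Nat.mod_upper_bound; lia].
    eapply mod_ne; [ | | | exact E]; lia. }
  destruct (finite_util i Hi) as [r Hr].
  destruct Hne as (Had & Hnash).
  set (mi := (fst (m i), fun k => if Nat.eq_dec k j then 0 else snd (m i) k)).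
  assert (Hadm : admissible Rs i mi).
  { intros k Hk. simpl. destruct (Nat.eq_dec k j); [lra|]. apply (Had i Hi k Hk). }
  set (m' := update m i mi).
  assert (Hf : forall k j', fst (m' k) j' = fst (m k) j').
  { intros k j'. unfold m', update. destruct (Nat.eq_dec k i); subst; reflexivity. }
  assert (Hsn : forall k j', j' <> j -> snd (m' k) j' = snd (m k) j').
  { intros k j' Hne'. unfold m', update. destruct (Nat.eq_dec k i); subst; simpl; auto.
    destruct (Nat.eq_dec j' j); congruence. }
  assert (Ha : (fun j0 => ahat N Rs m' j0) = (fun j0 => ahat N Rs m j0)).
  { apply functional_extensionality; intros j0. unfold ahat. f_equal.
    apply lsum_ext. intros; apply Hf. }
  assert (Hsi : snd (m' i) j = 0).
  { unfold m', update. destruct (Nat.eq_dec i i); [|congruence]. simpl.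
    destruct (Nat.eq_dec j j); congruence. }
  assert (Hso : forall k, k <> i -> snd (m' k) j = snd (m k) j).
  { intros k Hk. unfold m', update. destruct (Nat.eq_dec k i); congruence. }
  set (X := snd (m i) j * (fst (m i) j - fst (m ip) j) ^ 2).
  assert (HX0 : 0 <= X).
  { unfold X. apply Rmult_le_pos. apply (Had i Hi j Hj).
    rewrite <- Rsqr_pow2. apply Rle_0_sqr. }
  assert (HD : X <= that N Rs ord m i - that N Rs ord m' i).
  { unfold that. rewrite lsum_minus.
    set (D := fun x => _).
    assert (HDj : forall j', D j' = if Nat.eq_dec j' j then X else 0).
    { intros j'. unfold D, lij. rewrite !Hf.
      replace (ahat N Rs m' j') with (ahat N Rs m j') by
        (symmetry; exact (f_equal (fun f => f j') Ha)).
      destruct (Nat.eq_dec j' j).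
      - subst j'. fold ip ip2. rewrite Hsi, (Hso ip Hip), (Hso ip2 Hip2). unfold X. ring.
      - rewrite !Hsn by auto. ring. }
    replace X with (D j) by (rewrite HDj; destruct (Nat.eq_dec j j); congruence).
    apply lsum_ge; auto.
    intros y _. rewrite HDj. destruct (Nat.eq_dec y j); lra. }
  pose proof (Hnash i Hi mi Hadm) as Hle. fold m' in Hle.
  unfold outcome_util, uA in Hle. rewrite Ha, Hr in Hle. simpl in Hle.
  fold ip. fold X. lra.
Qed.

End S.

Theorem claim2 (N : nat) (Rs : nat -> list nat) (ord : nat -> list nat)
  (A : nat -> R -> Prop) (u : nat -> (nat -> R) -> ER) (m : profile) :
  setting N Rs ord A u ->
  nash_equilibrium N Rs ord u m ->
  (forall i j, (i < N)%nat -> In j (Rs i) ->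
     snd (m i) j * (fst (m i) j - fst (m (iplus ord i j)) j) ^ 2 = 0 /\
     snd (m (iplus ord i j)) j
       * (fst (m (iplus ord i j)) j - fst (m (iplus2 ord i j)) j) ^ 2 = 0) /\
  (forall i, (i < N)%nat ->
     that N Rs ord m i = lsum (Rs i) (fun j => lij ord m i j * ahat N Rs m j)).
Proof.
  intros Hs Hne.
  assert (P1 : forall i j, (i < N)%nat -> In j (Rs i) ->
     snd (m i) j * (fst (m i) j - fst (m (iplus ord i j)) j) ^ 2 = 0 /\
     snd (m (iplus ord i j)) j
       * (fst (m (iplus ord i j)) j - fst (m (iplus2 ord i j)) j) ^ 2 = 0).
  { intros i j Hi Hj. split; [eapply main; eauto|].
    destruct (cyc_facts N Rs ord A u Hs i j Hi Hj) as (Hnd & HL & Hp & Hnth & HjN).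
    pose proof Hs as Hs2. destruct Hs2 as (_ & _ & _ & HP & _). pose proof (HP j HjN) as HPj.
    set (k := iplus ord i j).
    assert (Hk : In k (ord j)).
    { unfold k, iplus, cyc_succ. apply nth_In. apply Nat.mod_upper_bound. lia. }
    apply (Permutation_in _ HPj), Cset_In in Hk. destruct Hk as [HkN Hjk].
    assert (E : iplus ord k j = iplus2 ord i j).
    { unfold k, iplus, iplus2, cyc_succ.
      assert (Hm : ((index_of i (ord j) + 1) mod length (ord j) < length (ord j))%nat)
        by (apply Nat.mod_upper_bound; lia).
      rewrite (index_of_nth _ _ _ Hnd Hm).
      rewrite Nat.add_mod_idemp_l by lia.
      replace (index_of i (ord j) + 1 + 1)%nat with (index_of i (ord j) + 2)%nat by lia.
      reflexivity. }
    rewrite <- E. exact (main N Rs ord A u m Hs Hne k j HkN Hjk). }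
  split; auto.
  intros i Hi. unfold that. apply lsum_ext. intros j Hj.
  destruct (P1 i j Hi Hj) as [E1 E2]. rewrite E1, E2. ring.
Qed.
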